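(* Let $d>2$, let $\alpha,\lambda\in\overline{\mathbb Q}$, and let $|\cdot|_v$ be an absolute value on $\overline{\mathbb Q}$. If $|\alpha|_v\ge2$ and $|\lambda|_v\le\frac12$, then for each $n_0\ge0$, $$\left|\lim_{n\to\infty}\frac{\log M_{n,v}}{d^n}-\frac{\log M_{n_0,v}}{d^{n_0}}\right|\le\frac{\log 2}{d^{n_0}(d-1)}.$$
   Context: Define $A_0=\alpha$, $B_0=1$, and for $n\ge0$, $A_{n+1}=A_n^d+\lambda B_n^d$, $B_{n+1}=A_nB_n^{d-1}$ (so $[A_n:B_n]$ is the $n$-th iterate of $\alpha$ under $z\mapsto(z^d+\lambda)/z$). Set $M_{n,v}=\max\{|A_n|_v,|B_n|_v\}$. *)

(* Defs.v *)
From HB Require Import structures.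
From mathcomp Require Import all_boot all_order all_algebra all_field.
From mathcomp Require Import all_classical all_reals all_analysis.
Set Implicit Arguments. Unset Strict Implicit. Unset Printing Implicit Defensive.
Import Order.TTheory GRing.Theory Num.Theory.
Local Open Scope ring_scope.

(* Qbar is modelled by algC, the algebraic closure of Q in mathcomp. *)

Definition is_absval (R : realType) (v : algC -> R) : Prop :=
  [/\ (forall x, 0 <= v x),
      (forall x, v x = 0 <-> x = 0),
      (forall x y, v (x * y) = v x * v y) &
      (forall x y, v (x + y) <= v x + v y)].

Fixpoint AB (d : nat) (alpha lambda : algC) (n : nat) : algC * algC :=
  match n with
  | 0 => (alpha, 1)
  | n'.+1 => let: (a, b) := AB d alpha lambda n' in
             (a ^+ d + lambda * b ^+ d, a * b ^+ d.-1)
  end.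

Definition A d alpha lambda n := (AB d alpha lambda n).1.
Definition B d alpha lambda n := (AB d alpha lambda n).2.

Definition M (R : realType) (v : algC -> R) d alpha lambda n : R :=
  Num.max (v (A d alpha lambda n)) (v (B d alpha lambda n)).

(* Main.v *)
Require Import Defs.
From HB Require Import structures.
From mathcomp Require Import all_boot all_order all_algebra all_field.
From mathcomp Require Import all_classical all_reals all_analysis.
From mathcomp Require Import ring lra.
Import Order.TTheory GRing.Theory Num.Theory numFieldNormedType.Exports.
Local Open Scope ring_scope.

Section Alg.
Variables (R : realType) (v : algC -> R).
Hypothesis hv : is_absval v.

Lemma v_ge0 x : 0 <= v x. Proof. by case: hv. Qed.
Lemma vM x y : v (x * y) = v x * v y. Proof. by case: hv. Qed.
Lemma vD x y : v (x + y) <= v x + v y. Proof. by case: hv. Qed.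
Lemma v1 : v 1 = 1.
Proof.
have h1 : v 1 != 0 by apply/eqP; case: hv => _ h _ _ /h; apply/eqP; exact: oner_neq0.
have : v 1 * v 1 = v 1 * 1 by rewrite -vM mulr1 mulr1.
by move/(mulfI h1).
Qed.
Lemma vN1 : v (-1) = 1.
Proof.
have h : v (-1) * v (-1) = 1 by rewrite -vM mulrNN mulr1 v1.
have h0 := v_ge0 (-1).
have [hl|hl|//] := ltrgtP (v (-1)) 1; exfalso; nra.
Qed.
Lemma vN x : v (- x) = v x.
Proof. by rewrite -mulN1r vM vN1 mul1r. Qed.
Lemma vDr x y : v x - v y <= v (x + y).
Proof.
have := vD (x + y) (- y); rewrite addrK vN; lra.
Qed.
Lemma vX x n : v (x ^+ n) = v x ^+ n.
Proof. by elim: n => [|n IH]; rewrite ?expr0 ?v1 // !exprS vM IH. Qed.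

Lemma core d (a b la : algC) : (2 < d)%N -> v la <= 1/2 ->
  2 <= v a -> 2 * v b <= v a ->
  let a' := a ^+ d + la * b ^+ d in
  [/\ 2 <= v a', 2 * v (a * b ^+ d.-1) <= v a',
      (v a) ^+ d / 2 <= v a' & v a' <= 2 * (v a) ^+ d].
Proof.
move=> hd hla ha hb /=.
set x := v a in ha hb *; set y := v b in hb *; set X := x ^+ d.
have y0 : 0 <= y := v_ge0 b.
have hy : y <= x / 2 by lra.
have hdd : d = d.-1.+1 by rewrite prednK // (ltn_trans _ hd).
have h8 : 8 <= X.
  have : 2 ^+ d <= X by apply: lerXn2r; rewrite ?nnegrE //; lra.
  have : (2:R) ^+ 3 <= 2 ^+ d by apply: ler_weXn2l => //; lra.
  rewrite (_ : (2:R) ^+ 3 = 8); first lra.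
  by rewrite !exprS expr0; lra.
have hyd : y ^+ d <= X / 8.
  have : y ^+ d <= (x / 2) ^+ d by apply: lerXn2r; rewrite ?nnegrE //; lra.
  rewrite expr_div_n -/X.
  have : (2:R) ^+ 3 <= 2 ^+ d by apply: ler_weXn2l => //; lra.
  rewrite (_ : (2:R) ^+ 3 = 8); last by rewrite !exprS expr0; lra.
  move=> h2 h1; apply: (le_trans h1).
  have X0 : 0 <= X by lra.
  rewrite ler_pdivrMr ?(lt_le_trans _ h2) //.
  rewrite mulrAC ler_pdivlMr ?(lt_le_trans _ h2) //.
  by apply: ler_wpM2l.
have hyd1 : y ^+ d.-1 <= x ^+ d.-1 / 4.
  have : y ^+ d.-1 <= (x / 2) ^+ d.-1 by apply: lerXn2r; rewrite ?nnegrE //; lra.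
  rewrite expr_div_n.
  have : (2:R) ^+ 2 <= 2 ^+ d.-1 by apply: ler_weXn2l; [lra | case: (d) hd => [|[|[|n]]]].
  rewrite (_ : (2:R) ^+ 2 = 4); last by rewrite !exprS expr0; lra.
  move=> h2 h1; apply: (le_trans h1).
  have X0 : 0 <= x ^+ d.-1 by apply: exprn_ge0; lra.
  rewrite ler_pdivrMr ?(lt_le_trans _ h2) //.
  rewrite mulrAC ler_pdivlMr ?(lt_le_trans _ h2) //.
  by apply: ler_wpM2l.
have hXe : X = x * x ^+ d.-1 by rewrite /X {1}hdd exprS.
have e0 : 0 <= x ^+ d.-1 by apply: exprn_ge0; lra.
have hl0 := v_ge0 la.
have hyd0 : 0 <= y ^+ d by apply: exprn_ge0.
have hlt : v (la * b ^+ d) <= X / 16.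
  rewrite vM vX -/y.
  have : v la * y ^+ d <= 1/2 * (X / 8) by apply: ler_pM.
  lra.
have hup := vD (a ^+ d) (la * b ^+ d).
have hlo := vDr (a ^+ d) (la * b ^+ d).
rewrite vX -/x -/X in hlo; rewrite vX -/x -/X in hup.
have hb' : 2 * v (a * b ^+ d.-1) <= X / 2.
  rewrite vM vX -/x -/y hXe.
  have : x * y ^+ d.-1 <= x * (x ^+ d.-1 / 4) by apply: ler_wpM2l => //; lra.
  lra.
split; lra.
Qed.
End Alg.
Lemma AS d al la n : A d al la n.+1 = A d al la n ^+ d + la * B d al la n ^+ d.
Proof. by rewrite /A /B /=; case: AB. Qed.
Lemma BS d al la n : B d al la n.+1 = A d al la n * B d al la n ^+ d.-1.
Proof. by rewrite /A /B /=; case: AB. Qed.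
Lemma A0 d al la : A d al la 0 = al. Proof. by []. Qed.
Lemma B0 d al la : B d al la 0 = 1. Proof. by []. Qed.

Theorem proposition6p1 (R : realType) (v : algC -> R) (d : nat)
    (alpha lambda : algC) (n0 : nat) :
  is_absval v -> (2 < d)%N -> 2 <= v alpha -> v lambda <= 1 / 2 ->
  exists L : R,
    ((fun n : nat => ln (M v d alpha lambda n) / (d%:R ^+ n)) @ \oo --> L)%classic /\
    `|L - ln (M v d alpha lambda n0) / (d%:R ^+ n0)|
      <= ln 2 / (d%:R ^+ n0 * (d%:R - 1)).
Proof.
move=> hv hd hal hla.
have inv n : 2 <= v (A d alpha lambda n) /\
             2 * v (B d alpha lambda n) <= v (A d alpha lambda n).
  elim: n => [|n [IH1 IH2]].
    by rewrite A0 B0 (v1 _ _ hv); split => //; lra.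
  by have [h1 h2 _ _] := core _ _ hv _ _ _ _ hd hla IH1 IH2; rewrite AS BS.
have hM n : M v d alpha lambda n = v (A d alpha lambda n).
  by rewrite /M max_l //; have [_ h] := inv n; have := v_ge0 _ _ hv (B d alpha lambda n); lra.
set D : R := d%:R.
have hD : 3 <= D by rewrite /D (ler_nat R 3 d).
have Dn0 n : 0 < D ^+ n by apply: exprn_gt0; lra.
have ln2 : 0 < ln (2:R) by apply: ln_gt0; lra.
set a := fun n : nat => ln (M v d alpha lambda n) / D ^+ n.
set c := fun n : nat => ln 2 / (D ^+ n * (D - 1)).
have a0 n : 0 <= a n.
  rewrite /a hM; apply: divr_ge0; last exact: ltW.
  by apply: ln_ge0; have [h _] := inv n; lra.
have c0 n : 0 <= c n.
  by rewrite /c; apply: divr_ge0; [exact: ltW | apply: mulr_ge0; [exact: ltW|lra]].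
have cS n : c n - c n.+1 = ln 2 / D ^+ n.+1.
  rewrite /c exprS; field.
  by apply/and3P; split; apply/eqP; have := Dn0 n; lra.
have step n : `|a n.+1 - a n| <= ln 2 / D ^+ n.+1.
  have [h1 h2] := inv n.
  have [_ _ lo hi] := core _ _ hv _ _ _ _ hd hla h1 h2.
  set x := v (A d alpha lambda n) in h1 h2 lo hi.
  set y := v (A d alpha lambda n ^+ d + lambda * B d alpha lambda n ^+ d) in lo hi.
  have x0 : 0 < x by lra.
  have X0 : 0 < x ^+ d by apply: exprn_gt0.
  have lnX : ln (x ^+ d) = D * ln x by rewrite lnXn // mulr_natl.
  have l1 : ln (x ^+ d / 2) <= ln y.
    have q : 0 < x ^+ d / 2 by apply: divr_gt0.
    by rewrite ler_ln ?posrE //; lra.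
  have l2 : ln y <= ln (2 * x ^+ d).
    have q : 0 < 2 * x ^+ d by apply: mulr_gt0.
    by rewrite ler_ln ?posrE //; lra.
  rewrite lnM ?lnV ?lnX in l1; try by rewrite posrE ?invr_gt0.
  rewrite lnM ?lnX in l2; try by rewrite posrE.
  rewrite /a !hM AS -/y -/x exprS.
  have -> : ln y / (D * D ^+ n) - ln x / D ^+ n = (ln y - D * ln x) / D ^+ n.+1.
    rewrite exprS; field; apply/andP; split; apply/eqP; have := Dn0 n; lra.
  rewrite -exprS normrM [X in _ * X]ger0_norm ?invr_ge0 ?(ltW (Dn0 _)) // ler_pM2r ?invr_gt0 //.
  by rewrite ler_norml; apply/andP; split; lra.
set b := fun n => a n + c n.
set e := fun n => a n - c n.
have bdec : nonincreasing_seq b.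
  apply/nonincreasing_seqP => n; rewrite /b.
  have := step n; rewrite ler_norml => /andP[_ h]; have := cS n; lra.
have einc : nondecreasing_seq e.
  apply/nondecreasing_seqP => n; rewrite /e.
  have := step n; rewrite ler_norml => /andP[h _]; have := cS n; lra.
have bcv : cvgn b.
  apply: nonincreasing_is_cvgn => //; exists 0 => _ [n _ <-].
  by have := a0 n; have := c0 n; rewrite /b; lra.
have ccv : (c @ \oo --> 0)%classic.
  have -> : c = geometric (ln 2 / (D - 1)) (D^-1).
    apply/funext => n; rewrite /c /geometric /= exprVn; field.
    by apply/andP; split; apply/eqP; have := Dn0 n; lra.
  apply: cvg_geometric; rewrite ger0_norm ?invr_ge0; last lra.
  by rewrite invf_lt1; lra.
have acv : (a @ \oo --> limn b - 0)%classic.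
  have -> : a = b - c by apply/funext => n; rewrite /b /= addrK.
  exact: cvgB.
have ecv : (e @ \oo --> limn b - 0 - 0)%classic.
  have -> : e = a - c by apply/funext.
  exact: cvgB.
rewrite !subr0 in acv ecv.
exists (limn b); split; first exact: acv.
have ub := nonincreasing_cvgn_ge bdec bcv n0.
have lb := nondecreasing_cvgn_le einc (cvgP _ ecv) n0.
rewrite (cvg_lim _ ecv) // in lb.
rewrite -/(a n0) -/(c n0) ler_distl; apply/andP; split; rewrite /b /e in ub lb; lra.
Qed.
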